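(* Consider an $N$-player distributionally robust game (as defined in the context) with ambiguity set $\mathcal{F}$, and suppose every player is risk neutral, i.e. $\varepsilon_i = 1$ for all $i \in \{1,\dots,N\}$. Then: (1) If $\mathcal{F} = \{ Q : \mathbb{E}_Q[\tilde{\mathbf{P}}] = \boldsymbol{\Psi}\}$ for a fixed matrix $\boldsymbol{\Psi}\in\mathbb{R}^{N\times\prod_{k=1}^N a_k}$, then the set of Distributionally Robust Optimization Equilibria of the game coincides with the set of Nash equilibria of the complete information game with payoff matrix $\boldsymbol{\Psi}$. (2) If the ambiguity set is a singleton, $\mathcal{F} = \{Q\}$, then the set of Distributionally Robust Optimization Equilibria coincides with the set of Bayesian Nash equilibria of the Bayesian game in which $\tilde{\mathbf{P}}$ has distribution $Q$. (3) If $\mathcal{F} = \{ Q : Q[\mathbf{W}\cdot \mathrm{vec}(\mathbb{E}_Q[\tilde{\mathbf{P}}]) \le \mathbf{h}] = 1\}$, then the set of Distributionally Robust Optimization Equilibria coincides with the set of Robust Optimization Equilibria of the robust game with uncertainty set $\mathcal{U} = \{\mathbf{P} : \mathbf{W}\cdot\mathrm{vec}(\mathbf{P}) \le \mathbf{h}\}$.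
   Context: A finite $N$-player game: player $i$ has actions $\{1,\dots,a_i\}$ and mixed strategy set $S_{a_i} = \{\mathbf{x}^i\in\mathbb{R}^{a_i} : \mathbf{x}^i\ge 0,\ \sum_{j=1}^{a_i} x^i_j = 1\}$; $S=\prod_{i} S_{a_i}$. A payoff matrix $\mathbf{P}\in\mathbb{R}^{N\times\prod_{k=1}^N a_k}$ has entries $\mathbf{P}^i_{(j_1,\dots,j_N)}$, the payoff to player $i$ when each player $k$ plays action $j_k$. The expected payoff is $\pi_i(\mathbf{P};\mathbf{x}^1,\dots,\mathbf{x}^N) = \sum_{j_1=1}^{a_1}\cdots\sum_{j_N=1}^{a_N}\mathbf{P}^i_{(j_1,\dots,j_N)}\prod_{k=1}^N x^k_{j_k}$. Write $\mathbf{x}^{-i}$ for the strategies of all players except $i$, and $(\mathbf{x}^{-i},\mathbf{u}^i)$ for the profile with $\mathbf{x}^i$ replaced by $\mathbf{u}^i$. $\mathrm{vec}(\mathbf{A})$ is the column vector obtained by stacking the rows of $\mathbf{A}$. $\tilde{\mathbf{P}}$ denotes a random payoff matrix. For a loss random variable $L$ and $\varepsilon\in(0,1]$, $Q\text{-CVaR}_\varepsilon(L) = \min_{\zeta\in\mathbb{R}} \zeta + \frac{1}{\varepsilon}\mathbb{E}_Q[L-\zeta]^+$, with $[x]^+=\max\{x,0\}$. Distributionally robust game: there is a commonly known ambiguity set $\mathcal{F}$ of probability distributions $Q$ of $\tilde{\mathbf{P}}$ and each player $i$ has a risk level $\varepsilon_i\in(0,1]$. A profile $(\mathbf{x}^1,\dots,\mathbf{x}^N)\in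 S$ is a Distributionally Robust Optimization Equilibrium iff for every $i$, $\mathbf{x}^i\in\arg\min_{\mathbf{u}^i\in S_{a_i}}\sup_{Q\in\mathcal{F}} Q\text{-CVaR}_{\varepsilon_i}[-\pi_i(\tilde{\mathbf{P}};\mathbf{x}^{-i},\mathbf{u}^i)]$. Nash equilibrium of the game with fixed payoff matrix $\check{\mathbf{P}}$: for every $i$, $\mathbf{x}^i\in\arg\max_{\mathbf{u}^i\in S_{a_i}}\pi_i(\check{\mathbf{P}};\mathbf{x}^{-i},\mathbf{u}^i)$. Bayesian Nash equilibrium (with $\tilde{\mathbf{P}}$ distributed according to a known distribution): for every $i$, $\mathbf{x}^i\in\arg\max_{\mathbf{u}^i\in S_{a_i}}\mathbb{E}[\pi_i(\tilde{\mathbf{P}};\mathbf{x}^{-i},\mathbf{u}^i)]$. Robust Optimization Equilibrium with uncertainty set $\mathcal{U}$: for every $i$, $\mathbf{x}^i\in\arg\max_{\mathbf{u}^i\in S_{a_i}}\inf_{\tilde{\mathbf{P}}\in\mathcal{U}}\pi_i(\tilde{\mathbf{P}};\mathbf{x}^{-i},\mathbf{u}^i)$. *)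

(* Defs.v *)
From HB Require Import structures.
From mathcomp Require Import all_boot all_order all_algebra.
From mathcomp Require Import all_classical all_reals all_analysis.
Unset Printing Implicit Defensive.
Import Order.TTheory GRing.Theory Num.Theory.
Local Open Scope classical_set_scope.
Local Open Scope ring_scope.

(* Game with N players; player i has a i actions, indexed by 'I_(a i)
   (action j+1 of the paper is the ordinal j). *)

Definition profile {N : nat} (a : 'I_N -> nat) :=
  {dffun forall i : 'I_N, 'I_(a i)}.

Definition pidx {N : nat} (a : 'I_N -> nat) := ('I_N * profile a)%type.

(* a payoff matrix P in R^{N x prod_k a_k}, P (i, j) = P^i_{(j_1..j_N)} *)
Definition paymx (R : realType) {N : nat} (a : 'I_N -> nat) := pidx a -> R.

HB.instance Definition _ (R : realType) {N : nat} (a : 'I_N -> nat) :=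
  gen_eqMixin (paymx R a).
HB.instance Definition _ (R : realType) {N : nat} (a : 'I_N -> nat) :=
  gen_choiceMixin (paymx R a).
HB.instance Definition _ (R : realType) {N : nat} (a : 'I_N -> nat) :=
  isPointed.Build (paymx R a) (fun _ => 0).

Definition entry_sets (R : realType) {N : nat} (a : 'I_N -> nat)
  : set (set (paymx R a)) :=
  [set A | exists (k : pidx a) (B : set R),
     measurable B /\ A = (fun P : paymx R a => P k) @^-1` B].

(* measurable space of payoff matrices (Borel = product sigma-algebra) *)
Definition PM (R : realType) {N : nat} (a : 'I_N -> nat)
  : measurableType (sigma_display (entry_sets R a)) :=
  g_sigma_algebraType (entry_sets R a).

Definition strat (R : realType) {N : nat} (a : 'I_N -> nat) :=
  forall i : 'I_N, 'I_(a i) -> R.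

Definition in_simplex {R : realType} {n : nat} (u : 'I_n -> R) : Prop :=
  (forall j, 0 <= u j) /\ \sum_(j < n) u j = 1.

Definition in_S {R : realType} {N : nat} {a : 'I_N -> nat} (x : strat R a)
  : Prop := forall i, in_simplex (x i).

Definition pi_dev {R : realType} {N : nat} {a : 'I_N -> nat}
  (P : paymx R a) (x : strat R a) (i : 'I_N) (u : 'I_(a i) -> R) : R :=
  \sum_(j : profile a)
     P (i, j) * (u (j i) * \prod_(k < N | k != i) x k (j k)).

Local Open Scope ereal_scope.

Definition CVaR {R : realType} {N : nat} {a : 'I_N -> nat}
  (Q : probability (PM R a) R) (eps : R) (L : PM R a -> R) : \bar R :=
  ereal_inf [set (z%:E + (eps^-1)%:E * \int[Q]_P (Num.max (L P - z)%R 0%R)%:E)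
            | z in [set: R]].

Definition dro_obj {R : realType} {N : nat} {a : 'I_N -> nat}
  (F : set (probability (PM R a) R)) (eps : 'I_N -> R)
  (x : strat R a) (i : 'I_N) (u : 'I_(a i) -> R) : \bar R :=
  ereal_sup [set CVaR Q (eps i) (fun P : PM R a => (- pi_dev P x i u)%R)
            | Q in F].

Definition DROE {R : realType} {N : nat} {a : 'I_N -> nat}
  (F : set (probability (PM R a) R)) (eps : 'I_N -> R) (x : strat R a)
  : Prop :=
  in_S x /\
  forall i (u : 'I_(a i) -> R), in_simplex u ->
    dro_obj F eps x i (x i) <= dro_obj F eps x i u.

Definition NashEq {R : realType} {N : nat} {a : 'I_N -> nat}
  (P : paymx R a) (x : strat R a) : Prop :=
  in_S x /\
  forall i (u : 'I_(a i) -> R), in_simplex u ->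
    (pi_dev P x i u <= pi_dev P x i (x i))%R.

Definition BayesNashEq {R : realType} {N : nat} {a : 'I_N -> nat}
  (Q : probability (PM R a) R) (x : strat R a) : Prop :=
  in_S x /\
  forall i (u : 'I_(a i) -> R), in_simplex u ->
    \int[Q]_P (pi_dev P x i u)%:E <= \int[Q]_P (pi_dev P x i (x i))%:E.

Definition RobustEq {R : realType} {N : nat} {a : 'I_N -> nat}
  (U : set (paymx R a)) (x : strat R a) : Prop :=
  in_S x /\
  forall i (u : 'I_(a i) -> R), in_simplex u ->
    ereal_inf [set (pi_dev P x i u)%:E | P in U]
      <= ereal_inf [set (pi_dev P x i (x i))%:E | P in U].

Definition has_mean {R : realType} {N : nat} {a : 'I_N -> nat}
  (Q : probability (PM R a) R) : Prop :=
  forall k : pidx a, Q.-integrable setT (fun P : PM R a => (P k)%:E).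

(* E_Q[P~] (meaningful when has_mean Q) *)
Definition mean {R : realType} {N : nat} {a : 'I_N -> nat}
  (Q : probability (PM R a) R) : paymx R a :=
  fun k => fine (\int[Q]_P (P k)%:E).

(* W . vec(P), with W indexed by rows 'I_m and columns pidx a *)
Definition Wvec {R : realType} {N : nat} {a : 'I_N -> nat} {m : nat}
  (W : 'I_m -> pidx a -> R) (P : paymx R a) : 'I_m -> R :=
  fun r => (\sum_(k : pidx a) W r k * P k)%R.

(* Main.v *)
Require Import Defs.
From HB Require Import structures.
From mathcomp Require Import all_boot all_order all_algebra.
From mathcomp Require Import all_classical all_reals all_analysis.
From mathcomp Require Import lra ring measurable_realfun.
Import Order.TTheory GRing.Theory Num.Theory.
Local Open Scope classical_set_scope.
Local Open Scope ring_scope.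

Section cvar.
Context {R : realType}.

Lemma max_split (r z : R) : Num.max (r - z) 0 = (r - z) + Num.max (z - r) 0.
Proof.
have [h|h] := boolP (r - z <= 0); last rewrite -ltNge in h.
  rewrite (max_r h) max_l; last lra.
  by ring.
by rewrite (max_l (ltW h)) max_r ?addr0 //; lra.
Qed.

Lemma max_bound (r z : R) : z <= 0 -> `|Num.max (z - r) 0| <= `|r|.
Proof.
move=> hz; have h1 : - r <= `|r| by rewrite -normrN ler_norm.
have [h|h] := boolP (z - r <= 0); last rewrite -ltNge in h.
  by rewrite max_r // normr0.
rewrite max_l ?(ltW h) // ger0_norm ?(ltW h) //; lra.
Qed.

Local Open Scope ereal_scope.

Lemma cvar1 d (T : measurableType d) (Q : probability T R) (f : T -> R) :
  Q.-integrable setT (EFin \o f) ->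
  ereal_inf [set (z%:E + ((1:R)^-1)%:E * \int[Q]_x (Num.max (f x - z) 0)%:E)
            | z in [set: R]] = \int[Q]_x (f x)%:E.
Proof.
move=> intf.
have mf : measurable_fun setT f.
  by apply/measurable_realfun.measurable_EFinP; exact: measurable_int intf.
have ffin : \int[Q]_x (f x)%:E \is a fin_num.
  rewrite -integral_fin_num_abs //; by case/integrableP: intf.
have icst k : Q.-integrable setT (EFin \o cst k).
  exact: finite_measure_integrable_cst.
have intB k : Q.-integrable setT (fun x => (f x - k)%:E).
  apply: eq_integrable (integrableB measurableT intf (icst k)) => //.
have intB' k : \int[Q]_x (f x - k)%:E = \int[Q]_x (f x)%:E - k%:E.
  rewrite -[k%:E]mule1 -(probability_setT Q) -integral_cst //.
  rewrite -integralB_EFin //.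
  exact: icst k.
have intM z : Q.-integrable setT (fun x => (Num.max (z - f x) 0)%:E).
  apply: (le_integrable measurableT _ _ (integrableN (intB z))).
    apply/measurable_realfun.measurable_EFinP; apply: measurable_realfun.measurable_maxr => //.
    by apply: measurable_realfun.measurable_funB => //; exact: measurable_cst.
  move=> x _ /=; rewrite lee_fin opprB.
  have [h|h] := boolP (z - f x <= 0)%R; last rewrite -ltNge in h.
    by rewrite max_r // normr0.
  by rewrite max_l ?(ltW h).
have key z : z%:E + \int[Q]_x (Num.max (f x - z) 0)%:E =
     \int[Q]_x (f x)%:E + \int[Q]_x (Num.max (z - f x) 0)%:E.
  under eq_integral do rewrite max_split EFinD.
  rewrite (integralD measurableT (intB z) (intM z)) intB' addeA.
  by rewrite [z%:E + _]addeC subeK.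
apply/eqP; rewrite eq_le; apply/andP; split; last first.
  apply/ereal_infP => _ [z _ <-]; rewrite invr1 mul1e key.
  by rewrite leeDl // integral_ge0 // => x _; rewrite lee_fin le_max lexx orbT.
pose s n := \int[Q]_x (f x)%:E + \int[Q]_x (Num.max ((- n%:R) - f x) 0)%:E.
have scvg : s n @[n --> \oo] --> \int[Q]_x (f x)%:E.
  rewrite -[X in _ --> X]adde0; apply: cvgeD.
  - by rewrite fin_num_adde_defl.
  - exact: cvg_cst.
  have [] := @dominated_convergence _ _ _ Q setT measurableT
    (fun n x => (Num.max ((- n%:R) - f x) 0)%:E) (cst 0) (abse \o (EFin \o f)).
  - move=> n; apply/measurable_realfun.measurable_EFinP; apply: measurable_realfun.measurable_maxr => //.
    by apply: measurable_realfun.measurable_funB => //; exact: measurable_cst.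
  - exact: measurable_cst.
  - apply: aeW => x _; apply: cvg_near_cst.
    near=> n; have hn : (`|f x| <= n%:R)%R by near: n; exact: nbhs_infty_ger.
    have h1 : (- f x <= `|f x|)%R by rewrite -normrN ler_norm.
    by rewrite max_r //; lra.
  - exact: integrable_abse.
  - apply: aeW => x n _ /=; rewrite lee_fin; apply: max_bound.
    by rewrite oppr_le0.
  by move=> _ _; rewrite integral0.
have : ereal_inf [set (z%:E + ((1:R)^-1)%:E * \int[Q]_x (Num.max (f x - z) 0)%:E)
            | z in [set: R]] <= lim (s n @[n --> \oo]).
  apply: lime_ge; first exact: cvgP scvg.
  apply: nearW => n; apply: ereal_inf_lbound; exists (- n%:R)%R => //.
  by rewrite invr1 mul1e key.
by rewrite (cvg_lim _ scvg).
Unshelve. all: end_near.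
Qed.
End cvar.
Section game.
Context {R : realType} {N : nat} {a : 'I_N -> nat}.
Local Open Scope ereal_scope.

Lemma entry_meas (k : pidx a) : measurable_fun setT (fun P : PM R a => P k).
Proof.
move=> _ B mB; rewrite setTI; apply: sub_sigma_algebra.
by exists k, B.
Qed.

Lemma int_row (Q : probability (PM R a) R) (hm : has_mean Q) (i : 'I_N)
  (w : profile a -> R) :
  Q.-integrable setT (EFin \o (fun P : PM R a => \sum_j P (i, j) * w j)%R) /\
  \int[Q]_P (\sum_j P (i, j) * w j)%:E = (\sum_j mean Q (i, j) * w j)%:E.
Proof.
have ik j : Q.-integrable setT (fun P : PM R a => (w j)%:E * (P (i, j))%:E).
  exact: integrableZl (hm (i, j)).
have e P : (\sum_j P (i, j) * w j)%:E = \sum_j (w j)%:E * (P (i, j))%:E.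
  by rewrite -sumEFin; apply: eq_bigr => j _; rewrite mulrC.
split.
  apply: (eq_integrable measurableT (fun P : PM R a => \sum_j (w j)%:E * (P (i, j))%:E)).
    by move=> P _ /=; rewrite e.
  by apply: integrable_sum => // j _; exact: ik.
under eq_integral do rewrite e.
rewrite integral_sum //.
rewrite -sumEFin; apply: eq_bigr => j _.
rewrite integralZl // /mean.
have fn : \int[Q]_P (P (i, j))%:E \is a fin_num.
  rewrite -integral_fin_num_abs //; last exact: entry_meas.
  by case/integrableP: (hm (i, j)).
by rewrite -{1}(fineK fn) -EFinM mulrC.
Qed.

Lemma dro_val (eps : 'I_N -> R) (rn : forall i, eps i = 1%R)
  (Q : probability (PM R a) R) (hm : has_mean Q) (x : strat R a) (i : 'I_N)
  (u : 'I_(a i) -> R) :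
  CVaR Q (eps i) (fun P : PM R a => (- pi_dev P x i u)%R)
  = (- pi_dev (mean Q) x i u)%:E.
Proof.
pose w j := (- (u (j i) * \prod_(k < N | k != i) x k (j k)))%R.
have e (P : paymx R a) : (- pi_dev P x i u = \sum_j P (i, j) * w j)%R.
  by rewrite /pi_dev -sumrN; apply: eq_bigr => j _; rewrite mulrN.
have [ir it] := int_row Q hm i w.
rewrite /CVaR rn.
under eq_fun do under eq_integral do rewrite e.
rewrite (@cvar1 R _ _ Q _ ir) it e //.
Qed.

Lemma int_pi (Q : probability (PM R a) R) (hm : has_mean Q) (x : strat R a)
  (i : 'I_N) (u : 'I_(a i) -> R) :
  \int[Q]_P (pi_dev P x i u)%:E = (pi_dev (mean Q) x i u)%:E.
Proof. exact: (int_row Q hm i _).2. Qed.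

Definition pdirac (P0 : paymx R a) : probability (PM R a) R :=
  (@dirac _ (PM R a) P0 R : probability (PM R a) R).

Lemma pdirac_mean (P0 : paymx R a) : has_mean (pdirac P0) /\ mean (pdirac P0) = P0.
Proof.
split.
  move=> k; apply/integrableP; split.
    by apply/measurable_realfun.measurable_EFinP; exact: entry_meas.
  rewrite integral_dirac //; last first.
    have H1 : measurable_fun setT (EFin \o (fun P : PM R a => P k)).
      by apply/measurable_realfun.measurable_EFinP; exact: entry_meas.
    have H2 := measurableT_comp (f := (abse : \bar R -> \bar R)) _ H1.
    exact: H2.
  by rewrite diracT mul1e ltry.
apply: funext => k; rewrite /mean integral_dirac //; last first.
  by apply/measurable_realfun.measurable_EFinP; exact: entry_meas.
by rewrite diracT mul1e.
Qed.


Lemma droe_nash (F : set (probability (PM R a) R)) (eps : 'I_N -> R)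
  (Psi : paymx R a) :
  (forall x i u, dro_obj F eps x i u = (- pi_dev Psi x i u)%:E) ->
  forall x, DROE F eps x <-> NashEq Psi x.
Proof.
move=> H x; split => -[hS hx]; split => // i u hu; have := hx i u hu;
  by rewrite !H lee_fin lerN2.
Qed.

Lemma pdirac_set (P0 : paymx R a) (C : paymx R a -> Prop) :
  C P0 -> (pdirac P0) [set _ : PM R a | C (mean (pdirac P0))] = 1.
Proof.
move=> hC; rewrite (pdirac_mean P0).2.
have -> : [set _ : PM R a | C P0] = setT by apply/seteqP; split.
exact: probability_setT.
Qed.

Lemma prob_const (Q : probability (PM R a) R) (C : Prop) :
  Q [set _ : PM R a | C] = 1 -> C.
Proof.
move=> h; have [//|nC] := pselect C.
have e : [set _ : PM R a | C] = set0.
  apply/seteqP; split; first by move=> ? /nC.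
  by move=> ?.
move: h; rewrite e measure0 => /eqP; rewrite eq_sym.
by rewrite eqe oner_eq0.
Qed.

End game.

Theorem theorem1 (R : realType) (N : nat) (a : 'I_N -> nat)
  (eps : 'I_N -> R) (risk_neutral : forall i, eps i = 1) :
  (* (1) moment ambiguity set with known mean Psi *)
  (forall Psi : paymx R a,
     [set x : strat R a |
       DROE [set Q : probability (PM R a) R |
               has_mean Q /\ mean Q = Psi] eps x]
     = [set x | NashEq Psi x]) /\
  (* (2) singleton ambiguity set *)
  (forall Q : probability (PM R a) R, has_mean Q ->
     [set x : strat R a | DROE [set Q] eps x]
     = [set x | BayesNashEq Q x]) /\
  (* (3) polyhedral constraint on the mean *)
  (forall (m : nat) (W : 'I_m -> pidx a -> R) (h : 'I_m -> R),
     [set x : strat R a |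
       DROE [set Q : probability (PM R a) R |
               has_mean Q /\
               Q [set _ : PM R a | forall r, Wvec W (mean Q) r <= h r]
                 = 1%E] eps x]
     = [set x | RobustEq [set P : paymx R a | forall r, Wvec W P r <= h r] x]).
Proof.
split; [|split].
- move=> Psi; apply: funext => x; apply: propext; apply: droe_nash => y i u.
  rewrite /dro_obj.
  have -> : [set CVaR Q (eps i) (fun P : PM R a => (- pi_dev P y i u)%R)
            | Q in [set Q : probability (PM R a) R | has_mean Q /\ mean Q = Psi]]
            = [set (- pi_dev Psi y i u)%:E].
    apply/seteqP; split.
      by move=> _ [Q [hm <-] <-]; rewrite /= (dro_val _ risk_neutral _ hm).
    move=> _ ->; exists (pdirac Psi); first exact: pdirac_mean.
    by rewrite (dro_val _ risk_neutral _ (pdirac_mean Psi).1) (pdirac_mean Psi).2.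
  exact: ereal_sup1.
- move=> Q hm; apply: funext => x; apply: propext.
  have E : forall y, DROE [set Q] eps y <-> NashEq (mean Q) y.
    apply: droe_nash => y i u; rewrite /dro_obj image_set1 ereal_sup1.
    exact: dro_val _ risk_neutral _ hm y i u.
  apply: iff_trans (E x) _.
  split => -[hS hx]; split => // i u hu; have := hx i u hu;
    by rewrite !int_pi.
- move=> m W h; apply: funext => x; apply: propext.
  pose U := [set P : paymx R a | forall r, Wvec W P r <= h r].
  have key y i u : dro_obj [set Q : probability (PM R a) R |
               has_mean Q /\
               Q [set _ : PM R a | forall r, Wvec W (mean Q) r <= h r]
                 = 1%E] eps y i u
      = (- ereal_inf [set (pi_dev P y i u)%:E | P in U])%E.
    rewrite -ereal_supN /dro_obj; apply: congr1.
    apply/seteqP; split.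
      move=> _ [Q [hm hQ] <-]. rewrite (dro_val _ risk_neutral _ hm).
      exists (pi_dev (mean Q) y i u)%:E; last by rewrite EFinN.
      exists (mean Q); last by [].
      exact: (prob_const Q (forall r, Wvec W (mean Q) r <= h r) hQ).
    move=> _ [_ [P UP <-] <-]; exists (pdirac P).
      split; first exact: (pdirac_mean P).1.
      exact: (pdirac_set P (fun P1 : paymx R a => forall r, Wvec W P1 r <= h r) UP).
    rewrite (dro_val _ risk_neutral _ (pdirac_mean P).1) (pdirac_mean P).2.
    exact: EFinN.
  rewrite /=; split => -[hS hx]; split; try exact: hS.
    move=> i u hu; have := hx i u hu.
    by rewrite (key x i u) (key x i (x i)) leeN2.
  move=> i u hu; rewrite (key x i u) (key x i (x i)) leeN2.
  exact: hx.
Qed.
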